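(* Let $X$ be a standard one-dimensional Brownian motion starting at $0$, $p$ the atomic proposition with $X(\omega),t\models_n p$ iff $X_t(\omega)\geq1$, and $\phi_1:=\Box_{(1,2)}(\Diamond_{(1,4)}p\wedge\lnot\Diamond_{(1,3)}p)$, $\phi_2:=(\Diamond_{(1,3)}\phi_1)\wedge(\lnot\Diamond_{(1,2)}\phi_1)\wedge(\lnot\Diamond_{(2,3)}\phi_1)$, $\phi_3:=\Diamond_{(1,2)}\phi_2$, $\psi:=(\lnot p)\wedge(\lnot\Diamond_{(0,8)}p)\wedge\phi_3$. Let $n\geq2$. Then $X(\omega),0\not\models_n\psi$ for every $\omega\in\Omega$.
   Context: $\mathbb{N}/n:=\{k/n : k\in\mathbb{N}\}$. Discrete semantics at $t\in\mathbb{N}/n$: $\lnot,\wedge$ classical; $X(\omega),t\models_n\Diamond_I\phi$ iff $\exists s\in I\cap\mathbb{N}/n$ with $X(\omega),t+s\models_n\phi$; $X(\omega),t\models_n\Box_I\phi$ iff $\forall s\in I\cap\mathbb{N}/n$, $X(\omega),t+s\models_n\phi$. *)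

(* Defs.v *)
From HB Require Import structures.
From mathcomp Require Import all_boot all_order all_algebra.
From mathcomp Require Import all_classical all_reals all_analysis.
Set Implicit Arguments. Unset Strict Implicit. Unset Printing Implicit Defensive.
Import Order.TTheory GRing.Theory Num.Theory.
Import numFieldTopology.Exports.
Local Open Scope classical_set_scope.
Local Open Scope ring_scope.

(* X t w = X_t(w); only times t >= 0 are meaningful. *)

Definition is_standard_BM {R : realType} {d : measure_display}
    {T : measurableType d} (P : probability T R) (X : R -> T -> R) : Prop :=
  [/\
      (forall t, 0 <= t -> measurable_fun setT (X t)),
      (forall w, X 0 w = 0),
      (forall w, {within `[(0:R), +oo[%classic, continuous (fun t : R => X t w)}),
      (forall s t, 0 <= s -> s < t -> forall B : set R, measurable B ->
         P [set w | B (X t w - X s w)] = normal_prob 0 (Num.sqrt (t - s)) B) &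
      (forall (k : nat) (ts : nat -> R), 0 <= ts 0%N ->
         (forall i, ts i < ts i.+1) ->
         forall B : nat -> set R, (forall i, measurable (B i)) ->
         P (\bigcap_(i in [set j | (j < k)%N]) [set w | B i (X (ts i.+1) w - X (ts i) w)])
         = (\prod_(i < k) P [set w | B i (X (ts i.+1) w - X (ts i) w)%R])%E)].

Inductive mtl (R : realType) : Type :=
| Atom of (R -> Prop)
| Not of mtl R
| And of mtl R & mtl R
| Dia of set R & mtl R
| Box of set R & mtl R.
Arguments Atom {R}. Arguments Not {R}. Arguments And {R}.
Arguments Dia {R}. Arguments Box {R}.

(* sat n x k phi  <->  x, k/n |=_n phi, where x = X(w) is the path and the
   time point t = k/n ranges over N/n; s ranges over I ∩ N/n as s = j/n. *)
Fixpoint sat {R : realType} (n : nat) (x : R -> R) (k : nat) (phi : mtl R) : Prop :=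
  match phi with
  | Atom a => a (x (k%:R / n%:R))
  | Not f => ~ sat n x k f
  | And f g => sat n x k f /\ sat n x k g
  | Dia J f => exists j : nat, J (j%:R / n%:R) /\ sat n x (k + j)%N f
  | Box J f => forall j : nat, J (j%:R / n%:R) -> sat n x (k + j)%N f
  end.

Definition oo {R : realType} (a b : R) : set R := [set s | a < s < b].

Section formulas.
Context {R : realType}.
Definition p_atom : mtl R := Atom (fun v => 1 <= v).
Definition phi1 : mtl R :=
  Box (oo 1 2) (And (Dia (oo 1 4) p_atom) (Not (Dia (oo 1 3) p_atom))).
Definition phi2 : mtl R :=
  And (Dia (oo 1 3) phi1) (And (Not (Dia (oo 1 2) phi1)) (Not (Dia (oo 2 3) phi1))).
Definition phi3 : mtl R := Dia (oo 1 2) phi2.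
Definition psi : mtl R :=
  And (Not p_atom) (And (Not (Dia (oo 0 8) p_atom)) phi3).
End formulas.

(* Main.v *)
Require Import Defs.
From HB Require Import structures.
From mathcomp Require Import all_boot all_order all_algebra.
From mathcomp Require Import all_classical all_reals all_analysis.
From mathcomp Require Import zify.
Import Order.TTheory GRing.Theory Num.Theory.
Local Open Scope ring_scope.

Lemma ooE (R: realType) (n a b j : nat) : (0<n)%N ->
  oo (a%:R:R) b%:R (j%:R / n%:R) <-> (a*n < j < b*n)%N.
Proof.
move=> n0; have n0' : (0:R) < n%:R by rewrite ltr0n.
rewrite /oo /=.
by rewrite ltr_pdivlMr // ltr_pdivrMr // -!natrM !ltr_nat.
Qed.

Lemma phi1E (R: realType) n (x : R -> R) k : (0<n)%N ->
  sat n x k phi1 <-> forall j, (n<j<2*n)%N ->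
   (exists j', (n<j'<4*n)%N /\ sat n x (k+j+j') p_atom) /\
   ~ (exists j', (n<j'<3*n)%N /\ sat n x (k+j+j') p_atom).
Proof.
move=> n0; rewrite /phi1 /=; split.
- move=> H j hj; have hj2 : oo (1%:R:R) 2%:R (j%:R / n%:R) by apply/(ooE _ n 1 2 j n0); rewrite mul1n.
  have := H j hj2.
  move=> [[j' [h1 h2]] h3]; split.
  + exists j'; split=>//; have := (ooE _ n 1 4 j' n0).1 h1; by rewrite mul1n.
  + move=> [j'' [h4 h5]]; apply: h3; exists j''; split=>//.
    apply/(ooE _ n 1 3 j'' n0); by rewrite mul1n.
- move=> H j hj; have hj' := (ooE _ n 1 2 j n0).1 hj; rewrite mul1n in hj'.
  have [[j' [h1 h2]] h3] := H j hj'; split.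
  + exists j'; split=>//; apply/(ooE _ n 1 4 j' n0); by rewrite mul1n.
  + move=> [j'' [h4 h5]]; apply: h3; exists j''; split=>//.
    have := (ooE _ n 1 3 j'' n0).1 h4; by rewrite mul1n.
Qed.


Definition F (n : nat) (Q : nat -> Prop) (k : nat) : Prop :=
  forall j, (n<j<2*n)%N ->
   (exists j', (n<j'<4*n)%N /\ Q (k+j+j')%N) /\
   ~ (exists j', (n<j'<3*n)%N /\ Q (k+j+j')%N).

Lemma comb n Q K : (1 < n)%N -> (forall i, (0 < i < 8*n)%N -> ~ Q i) ->
  (3*n < K < 4*n)%N -> F n Q K -> ~ F n Q (K-1) -> F n Q (K+1).
Proof.
move=> hn hA hK FK nFKm.
have Qe : forall a b, a = b -> Q a -> Q b by move=> a b ->.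
have hB : forall i, (K+2*n+1 <= i <= K+4*n)%N -> ~ Q i.
  move=> i hi hQ.
  have [e|ne] := eqVneq i (K+2*n+1)%N.
    by apply: (hA i) => //; lia.
  have [_ h2] := FK (n+1)%N ltac:(lia).
  apply: h2; exists (i - (K+n+1))%N; split; first lia.
  by apply: Qe hQ; lia.
have hC : forall i, (K+4*n <= i < K+5*n)%N -> ~ Q i.
  move=> i hi hQ; apply: nFKm => j hj.
  have [e|ne] := eqVneq j (n+1)%N.
    subst j; split.
      exists (i - (K+n))%N; split; first lia.
      by apply: Qe hQ; lia.
    move=> [j' [hj' hQ']]; apply: (hB (K - 1 + (n+1) + j')%N) => //; lia.
  have := FK (j-1)%N ltac:(lia).
  have -> : (K + (j-1) = K - 1 + j)%N by lia.
  done.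
have hQ5 : Q (K+5*n)%N.
  have [[j' [hj' hQ']] _] := FK (n+1)%N ltac:(lia).
  have [le1|lt1] := leqP (K + (n+1) + j')%N (K+4*n)%N.
    by exfalso; apply: (hB _ _ hQ'); lia.
  have [le2|lt2] := ltnP (K + (n+1) + j')%N (K+5*n)%N.
    by exfalso; apply: (hC _ _ hQ'); lia.
  by apply: Qe hQ'; lia.
move=> j hj.
have [e|ne] := eqVneq j (2*n-1)%N.
  subst j; split.
    exists (3*n)%N; split; first lia.
    by apply: Qe hQ5; lia.
  move=> [j' [hj' hQ']].
  have [le1|lt1] := leqP (K + 1 + (2 * n - 1) + j')%N (K+4*n)%N.
    by apply: (hB _ _ hQ'); lia.
  by apply: (hC _ _ hQ'); lia.
have := FK (j+1)%N ltac:(lia).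
have -> : (K + (j+1) = K + 1 + j)%N by lia.
done.
Qed.

Theorem lemma5p5 (R : realType) (d : measure_display) (T : measurableType d)
    (P : probability T R) (X : R -> T -> R) :
  is_standard_BM P X ->
  forall n : nat, (2 <= n)%N ->
  forall w : T, ~ sat n (fun t => X t w) 0%N (@psi R).
Proof.
move=> _ n hn w.
set x := fun t => X t w.
have n0 : (0 < n)%N by lia.
move=> [_ [hnoP [j1 [hj1 [[j2 [hj2 H1]] [hn12 hn23]]]]]].
have hA : forall i, (0 < i < 8*n)%N -> ~ sat n x i p_atom.
  move=> i hi hp; apply: hnoP; exists i; split; last exact: hp.
  by apply/(ooE _ n 0 8 i n0); rewrite mul0n.
have hj1' : (n < j1 < 2*n)%N.
  by have := (ooE _ n 1 2 j1 n0).1 hj1; rewrite mul1n.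
have hj2' : (n < j2 < 3*n)%N.
  by have := (ooE _ n 1 3 j2 n0).1 hj2; rewrite mul1n.
have hK : sat n x (j1 + j2) phi1 by exact: H1.
have hN12 : forall j, (n < j < 2*n)%N -> ~ sat n x (j1 + j) phi1.
  move=> j hj hs; apply: hn12; exists j; split; last exact: hs.
  by apply/(ooE _ n 1 2 j n0); rewrite mul1n.
have hN23 : forall j, (2*n < j < 3*n)%N -> ~ sat n x (j1 + j) phi1.
  move=> j hj hs; apply: hn23; exists j; split; last exact: hs.
  exact/(ooE _ n 2 3 j n0).
have e2 : j2 = (2*n)%N.
  have [lt|ge] := ltnP j2 (2*n).
    by exfalso; apply: (hN12 j2) => //; lia.
  have [lt'|ge'] := ltnP (2*n) j2.
    by exfalso; apply: (hN23 j2) => //; lia.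
  lia.
subst j2.
clear hnoP H1 hn12 hn23 hj1 hj2.
have FK := (@phi1E R n x (j1 + 2*n) n0).1 hK.
have hcomb := @comb n (fun i => sat n x i p_atom) (j1 + 2*n)%N hn hA ltac:(lia) FK.
apply: (hN23 (2*n+1)%N); first lia.
apply/(@phi1E R n x _ n0).
have -> : (j1 + (2*n+1) = (j1 + 2*n) + 1)%N by lia.
apply: hcomb => FKm.
apply: (hN12 (2*n-1)%N); first lia.
apply/(@phi1E R n x _ n0).
have -> : (j1 + (2*n-1) = (j1 + 2*n) - 1)%N by lia.
exact: FKm.
Qed.
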